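(* Every graph $G$ with $n$ vertices has an $xy^+$-monotone EPG-representation in a $3n\times 2n$-grid.
   Context: The $w\times h$-grid consists of all grid-points $(i,j)$ with integer coordinates $1\le i\le w$, $1\le j\le h$, and all grid-edges joining grid-points at distance $1$. An EPG-representation of a graph $G$ assigns to each vertex $v$ a path $\mathrm{path}(v)$ in the grid such that $(v,w)$ is an edge of $G$ if and only if $\mathrm{path}(v)$ and $\mathrm{path}(w)$ share a grid-edge. A grid path is $xy$-monotone if every vertical line and every horizontal line meeting it meets it in a single interval; it is $xy^+$-monotone if it is $xy$-monotone and its left endpoint is not above its right endpoint. An $xy^+$-monotone EPG-representation is one in which all vertex-paths are $xy^+$-monotone. *)

(* Defs.v *)
From mathcomp Require Import all_boot.
Set Implicit Arguments. Unset Strict Implicit. Unset Printing Implicit Defensive.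

Definition gpoint := (nat * nat)%type.

Definition in_grid (w h : nat) (p : gpoint) : bool :=
  (1 <= p.1 <= w) && (1 <= p.2 <= h).

Definition gadj (p q : gpoint) : bool :=
  ((p.1 == q.1) && ((p.2 == q.2.+1) || (q.2 == p.2.+1))) ||
  ((p.2 == q.2) && ((p.1 == q.1.+1) || (q.1 == p.1.+1))).

Definition grid_path (w h : nat) (s : seq gpoint) : Prop :=
  [/\ s != [::], all (in_grid w h) s, path gadj (head (0,0) s) (behead s)
    & uniq s].

Definition gedges (s : seq gpoint) : seq (gpoint * gpoint) := zip s (behead s).

Definition share_edge (s t : seq gpoint) : bool :=
  has (fun e => (e \in gedges t) || ((e.2, e.1) \in gedges t)) (gedges s).

Definition contiguous (s : seq gpoint) (P : gpoint -> bool) : Prop :=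
  forall i j k, i <= j -> j <= k -> k < size s ->
    P (nth (0,0) s i) -> P (nth (0,0) s k) -> P (nth (0,0) s j).

(* xy-monotone: every vertical line x = c and horizontal line y = c meets the
   path in a single interval (only integer lines can meet vertices). *)
Definition xy_monotone (s : seq gpoint) : Prop :=
  forall c : nat, contiguous s (fun p => p.1 == c) /\ contiguous s (fun p => p.2 == c).

Definition xyp_monotone (s : seq gpoint) : Prop :=
  xy_monotone s /\
  (let a := head (0,0) s in let b := last (0,0) s in
   (a.1 < b.1 -> a.2 <= b.2) /\ (b.1 < a.1 -> b.2 <= a.2)).

Definition xyp_EPG_rep (n : nat) (e : rel 'I_n) (w h : nat)
  (P : 'I_n -> seq gpoint) : Prop :=
  (forall v, grid_path w h (P v) /\ xyp_monotone (P v)) /\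
  (forall u v, u != v -> (e u v <-> share_edge (P u) (P v))).

(* Main.v *)
Require Import Defs.
From mathcomp Require Import all_boot zify.
Set Implicit Arguments. Unset Strict Implicit. Unset Printing Implicit Defensive.

Definition ur (p q : gpoint) : bool := (q == (p.1.+1, p.2)) || (q == (p.1, p.2.+1)).
Definition psum (p : gpoint) := p.1 + p.2.

Lemma ur_gadj p q : ur p q -> gadj p q.
Proof. by case/orP=> /eqP ->; rewrite /gadj /= !eqxx ?orbT. Qed.

Lemma ur_sum p q : ur p q -> psum q = (psum p).+1.
Proof. by case/orP=> /eqP ->; rewrite /psum /=; lia. Qed.

Lemma ur_le1 p q : ur p q -> p.1 <= q.1.
Proof. by case/orP=> /eqP ->. Qed.
Lemma ur_le2 p q : ur p q -> p.2 <= q.2.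
Proof. by case/orP=> /eqP ->. Qed.

Definition ltS : rel gpoint := fun p q => psum p < psum q.
Definition le1 : rel gpoint := fun p q => p.1 <= q.1.
Definition le2 : rel gpoint := fun p q => p.2 <= q.2.

Lemma ltS_tr : transitive ltS. Proof. move=> ???; apply: ltn_trans. Qed.
Lemma le1_tr : transitive le1. Proof. move=> ???; apply: leq_trans. Qed.
Lemma le2_tr : transitive le2. Proof. move=> ???; apply: leq_trans. Qed.

Lemma ur_ltS p0 s : path ur p0 s -> path ltS p0 s.
Proof. apply: sub_path => p q /ur_sum; rewrite /ltS => ->. by []. Qed.
Lemma ur_le1P p0 s : path ur p0 s -> path le1 p0 s.
Proof. apply: sub_path => p q /ur_le1. by []. Qed.
Lemma ur_le2P p0 s : path ur p0 s -> path le2 p0 s.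
Proof. apply: sub_path => p q /ur_le2. by []. Qed.

Lemma ur_uniq p0 s : path ur p0 s -> uniq (p0 :: s).
Proof.
move=> /ur_ltS H; apply: (sorted_uniq ltS_tr) => //.
by move=> p; rewrite /ltS ltnn.
Qed.

Lemma ur_mono p0 s : path ur p0 s -> xy_monotone (p0 :: s).
Proof.
move=> H c; split=> i j k hij hjk hk /eqP Hi /eqP Hk; apply/eqP.
- have S := sorted_leq_nth le1_tr (fun p => leqnn _) (0,0) (s:=p0::s) (ur_le1P H).
  have h1 := S i j; have h2 := S j k.
  rewrite /le1 !inE in h1 h2.
  have a := h1 (leq_ltn_trans hij (leq_ltn_trans hjk hk)) (leq_ltn_trans hjk hk) hij.
  have b := h2 (leq_ltn_trans hjk hk) hk hjk.
  by rewrite Hi Hk in a b; apply/eqP; rewrite eqn_leq a b.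
- have S := sorted_leq_nth le2_tr (fun p => leqnn _) (0,0) (s:=p0::s) (ur_le2P H).
  have h1 := S i j; have h2 := S j k.
  rewrite /le2 !inE in h1 h2.
  have a := h1 (leq_ltn_trans hij (leq_ltn_trans hjk hk)) (leq_ltn_trans hjk hk) hij.
  have b := h2 (leq_ltn_trans hjk hk) hk hjk.
  by rewrite Hi Hk in a b; apply/eqP; rewrite eqn_leq a b.
Qed.

Lemma ur_ends p0 s : path ur p0 s ->
  (let a := head (0,0) (p0 :: s) in let b := last (0,0) (p0 :: s) in
   (a.1 < b.1 -> a.2 <= b.2) /\ (b.1 < a.1 -> b.2 <= a.2)).
Proof.
move=> H /=.
have A1 := order_path_min le1_tr (ur_le1P H).
have A2 := order_path_min le2_tr (ur_le2P H).
have : last p0 s \in p0 :: s by apply: mem_last.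
rewrite inE => /orP[/eqP -> | Hm]; first by split=> h; lia.
move/allP: A1 => /(_ _ Hm); move/allP: A2 => /(_ _ Hm); rewrite /le1 /le2.
move=> h2 h1; split=> h; first exact: h2. by rewrite ltnNge h1 in h.
Qed.

Lemma ged_sub p0 s p q : path ur p0 s -> (p, q) \in zip (p0 :: s) s ->
  [/\ ur p q, p \in p0 :: s & q \in p0 :: s].
Proof.
elim: s p0 => [|p1 s IH] p0 //= /andP[u Hp].
rewrite inE => /orP[/eqP [-> ->] | Hin].
  by rewrite u !inE !eqxx orbT.
have [a b c] := IH _ Hp Hin.
by split=> //; rewrite inE ?b ?c orbT.
Qed.

Lemma ged_sup p0 s p q : path ur p0 s -> p \in p0 :: s -> q \in p0 :: s ->
  ur p q -> (p, q) \in zip (p0 :: s) s.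
Proof.
elim: s p0 => [|p1 s IH] p0 /=.
  rewrite !inE => _ /eqP -> /eqP -> /ur_sum; lia.
move=> /andP[u Hp] Hpin Hqin upq.
have Hsq := ur_sum upq.
have M := order_path_min ltS_tr (ur_ltS Hp).
have s01 := ur_sum u.
case: (eqVneq p p0) => [Ep | Np].
- subst p. case: (eqVneq q p1) => [-> | Nq]; first by rewrite inE eqxx.
  exfalso. move: Hqin; rewrite !inE (negbTE Nq) /= => /orP[/eqP Eq | Hq].
    by subst q; lia.
  by move/allP: M => /(_ _ Hq); rewrite /ltS; lia.
- move: Hpin; rewrite inE (negbTE Np) /= => Hp1.
  have Hqin' : q \in p1 :: s.
    move: Hqin; rewrite inE => /orP[/eqP Eq | //]; exfalso; subst q.
    move: Hp1; rewrite inE => /orP[/eqP Ep1 | Hs].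
      by subst p; lia.
    by move/allP: M => /(_ _ Hs); rewrite /ltS; lia.
  by rewrite inE (IH _ Hp Hp1 Hqin' upq) orbT.
Qed.

Lemma share_ur p0 s q0 t : path ur p0 s -> path ur q0 t ->
  share_edge (p0 :: s) (q0 :: t) <->
  exists p q, [/\ ur p q, p \in p0 :: s, q \in p0 :: s, p \in q0 :: t & q \in q0 :: t].
Proof.
move=> Hs Ht; split.
- case/hasP=> [[p q]] He /= /orP[H | H].
  + have [u a b] := ged_sub Hs He; have [_ c d] := ged_sub Ht H.
    by exists p, q.
  + have [u a b] := ged_sub Hs He; have [u' _ _] := ged_sub Ht H.
    have := ur_sum u; have := ur_sum u'; lia.
- case=> p [q [u a b c d]]; apply/hasP; exists (p, q); first exact: ged_sup.
  by rewrite /= (ged_sup Ht c d u).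
Qed.

Definition vseg (x a b : nat) : seq gpoint := [seq (x, y) | y <- iota a (b - a).+1].
Definition hseg (y a k : nat) : seq gpoint := [seq (x, y) | x <- iota a k].

Lemma vpath x a k : path ur (x, a) [seq (x, y) | y <- iota a.+1 k].
Proof.
elim: k a => [|k IH] a //=; rewrite /ur /= !eqxx orbT /=; exact: IH.
Qed.
Lemma vlast x a k : last ((x, a) : gpoint) [seq ((x, y) : gpoint) | y <- iota a.+1 k] = (x, a + k).
Proof. elim: k a => [|k IH] a /=; first by rewrite addn0. by rewrite IH addSnnS. Qed.
Lemma hpath y a k : path ur (a, y) (hseg y a.+1 k).
Proof.
rewrite /hseg; elim: k a => [|k IH] a //=; rewrite /ur /= !eqxx /=; exact: IH.
Qed.
Lemma mem_vseg x a b p : (p \in vseg x a b) = (p.1 == x) && (a <= p.2 <= a + (b - a)).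
Proof.
apply/mapP/idP => [[y Hy ->] | /andP[/eqP E H]].
  by move: Hy; rewrite mem_iota addnS ltnS => H; rewrite /= eqxx.
exists p.2; last by case: p E H => ?? /= ->.
by rewrite mem_iota addnS ltnS.
Qed.
Lemma mem_hseg y a k p : (p \in hseg y a k) = (p.2 == y) && (a <= p.1 < a + k).
Proof.
apply/mapP/idP => [[x Hx ->] | /andP[/eqP E H]].
  by move: Hx; rewrite mem_iota => H; rewrite /= eqxx.
exists p.1; last by case: p E H => ?? /= ->.
by rewrite mem_iota.
Qed.

Section C.
End C.

Definition Aj n (e : rel 'I_n) (c : nat) (v : 'I_n) : bool :=
  [exists w : 'I_n, (w.+1 == c) && e w v].
Definition hh n (e : rel 'I_n) (v : 'I_n) (c : nat) : nat :=
  if v.+1 <= c then 2 * c else if Aj e c v then 2 * c else (2 * c).+1.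
Definition col n (e : rel 'I_n) (v : 'I_n) (c : nat) : seq gpoint :=
  vseg (2 * v.+1 + c) (hh e v c.-1) (hh e v c).
Definition stair n (e : rel 'I_n) (v : 'I_n) :=
  flatten [seq col e v c | c <- iota 1 v.+1].
Definition PP n (e : rel 'I_n) (v : 'I_n) : seq gpoint :=
  stair e v ++ hseg (2 * v.+1) (3 * v.+1).+1 (3 * n - 3 * v.+1).

Lemma hh_lo n (e : rel 'I_n) (v : 'I_n) c : 2 * c <= hh e v c.
Proof. rewrite /hh; case: ifP => _ //; case: ifP => _ //; lia. Qed.
Lemma hh_hi n (e : rel 'I_n) (v : 'I_n) c : hh e v c <= (2 * c).+1.
Proof. rewrite /hh; case: ifP => _ //; case: ifP => _ //; lia. Qed.
Lemma hh_big n (e : rel 'I_n) (v : 'I_n) c : v.+1 <= c -> hh e v c = 2 * c.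
Proof. by rewrite /hh => ->. Qed.
Lemma hh_eq n (e : rel 'I_n) (v : 'I_n) c : c < v.+1 -> hh e v c = 2 * c -> Aj e c v.
Proof. move=> Hc; rewrite /hh leqNgt Hc /=; case: ifP => // _; lia. Qed.

Lemma hh_mono n (e : rel 'I_n) (v : 'I_n) c : hh e v c.-1 <= hh e v c.
Proof.
case: c => [|c] //=; have := hh_hi e v c; have := hh_lo e v c.+1; lia.
Qed.

Lemma stair_path n (e : rel 'I_n) (v : 'I_n) c k : exists rest,
  [/\ flatten [seq col e v c' | c' <- iota c k.+1] = (2 * v.+1 + c, hh e v c.-1) :: rest,
      path ur (2 * v.+1 + c, hh e v c.-1) rest &
      last (2 * v.+1 + c, hh e v c.-1) rest = (2 * v.+1 + c + k, hh e v (c + k))].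
Proof.
have Hm := hh_mono e v.
elim: k c => [|k IH] c.
  exists [seq (2 * v.+1 + c, y) | y <- iota (hh e v c.-1).+1 (hh e v c - hh e v c.-1)].
  split; first by rewrite /= cats0.
    exact: vpath.
  by rewrite vlast subnKC ?Hm // !addn0.
have [r [E P L]] := IH c.+1.
set t := [seq (2 * v.+1 + c, y) | y <- iota (hh e v c.-1).+1 (hh e v c - hh e v c.-1)].
exists (t ++ (2 * v.+1 + c.+1, hh e v c) :: r); split.
- have -> : flatten [seq col e v c' | c' <- iota c k.+2] =
    col e v c ++ flatten [seq col e v c' | c' <- iota c.+1 k.+1] by [].
  rewrite E; reflexivity.
- rewrite cat_path vpath /= vlast subnKC ?Hm // P andbT.
  by rewrite /ur /= addnS eqxx.
- rewrite last_cat /= L. by rewrite !addnS addSn.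
Qed.

Lemma PP_path n (e : rel 'I_n) (v : 'I_n) : exists rest,
  PP e v = (2 * v.+1 + 1, hh e v 0) :: rest /\ path ur (2 * v.+1 + 1, hh e v 0) rest.
Proof.
have [r [E P L]] := stair_path e v 1 v.
exists (r ++ hseg (2 * v.+1) (3 * v.+1).+1 (3 * n - 3 * v.+1)); split.
  by rewrite /PP /stair E.
rewrite cat_path P L /= hh_big; last by rewrite add1n.
rewrite (_ : 2 * v.+1 + 1 + v = 3 * v.+1); last by lia.
rewrite (_ : 1 + v = v.+1) //; exact: hpath.
Qed.

Lemma mem_PP n (e : rel 'I_n) (v : 'I_n) p : p \in PP e v <->
  (exists c, [/\ 1 <= c <= v.+1, p.1 = 2 * v.+1 + c & hh e v c.-1 <= p.2 <= hh e v c])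
  \/ (p.2 = 2 * v.+1 /\ 3 * v.+1 < p.1 <= 3 * n).
Proof.
have vn := ltn_ord v.
case: p => x y.
rewrite /PP mem_cat mem_hseg /=; split.
- case/orP => [/flattenP [s /mapP [c Hc ->]] | /andP [/eqP E H]].
    rewrite /col mem_vseg subnKC ?hh_mono // => /andP[/eqP E H].
    left; exists c; split=> //. by move: Hc; rewrite mem_iota; lia.
  right; split=> //; lia.
- case => [[c [Hc E H]] | [E H]].
    apply/orP; left; apply/flattenP; exists (col e v c).
      apply/mapP; exists c => //; rewrite mem_iota; lia.
    by rewrite /col mem_vseg subnKC ?hh_mono // E eqxx.
  apply/orP; right; rewrite E eqxx /=; lia.
Qed.

Lemma hh_le n (e : rel 'I_n) (v : 'I_n) c : c <= v.+1 -> hh e v c <= 2 * v.+1.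
Proof.
rewrite leq_eqVlt => /orP[/eqP -> | H]; first by rewrite hh_big.
have := hh_hi e v c; lia.
Qed.

Lemma colF n (e : rel 'I_n) (v : 'I_n) c : 1 <= c <= v.+1 ->
  [/\ 2 * c.-1 <= hh e v c.-1, hh e v c.-1 <= (2 * c.-1).+1, 2 * c <= hh e v c,
      hh e v c <= (2 * c).+1 & hh e v c <= 2 * v.+1].
Proof.
move=> /andP[H1 H2]; split; [exact: hh_lo | exact: hh_hi | exact: hh_lo | exact: hh_hi |].
exact: hh_le.
Qed.

Lemma Aj_e n (e : rel 'I_n) (u v : 'I_n) : Aj e u.+1 v = e u v.
Proof.
apply/existsP/idP => [[w /andP[/eqP E H]] | H]; last by exists u; rewrite eqxx.
by have -> : u = w by apply: val_inj; case: E.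
Qed.

Lemma common_pt n (e : rel 'I_n) (u v : 'I_n) p : u < v ->
  p \in PP e u -> p \in PP e v ->
  p.2 = 2 * u.+1 /\ exists c, [/\ 1 <= c <= v.+1, p.1 = 2 * v.+1 + c &
     hh e v c.-1 <= 2 * u.+1 <= hh e v c].
Proof.
move=> uv /mem_PP Hu /mem_PP Hv.
case: p Hu Hv => x y /= Hu Hv.
case: Hu => [[c [Hc E H]] | [E H]]; case: Hv => [[c' [Hc' E' H']] | [E' H']].
- have [a1 a2 a3 a4 a5] := colF e Hc; have [b1 b2 b3 b4 b5] := colF e Hc'.
  exfalso. case: c Hc E H a1 a2 a3 a4 a5 => [|c] //= Hc E H a1 a2 a3 a4 a5.
  case: c' Hc' E' H' b1 b2 b3 b4 b5 => [|c'] //= Hc' E' H' b1 b2 b3 b4 b5.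
  lia.
- have [a1 a2 a3 a4 a5] := colF e Hc. exfalso; lia.
- split=> //; exists c'; split=> //; rewrite -E //.
- exfalso; lia.
Qed.

Lemma key n (e : rel 'I_n) (u v : 'I_n) : u < v ->
  (e u v <-> exists p q, [/\ ur p q, p \in PP e u, q \in PP e u, p \in PP e v & q \in PP e v]).
Proof.
move=> uv; have vn := ltn_ord v; split.
- move=> Huv.
  have hU : hh e v u.+1 = 2 * u.+1.
    by rewrite /hh leqNgt ltnS uv /= Aj_e Huv.
  have h1 := hh_hi e v u. have h2 := hh_lo e v u.+2.
  exists (2 * v.+1 + u.+1, 2 * u.+1), (2 * v.+1 + u.+2, 2 * u.+1); split.
  + by rewrite /ur /= addnS eqxx.
  + apply/mem_PP; right; split=> //=; lia.
  + apply/mem_PP; right; split=> //=; lia.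
  + apply/mem_PP; left; exists u.+1; split=> /=; lia.
  + apply/mem_PP; left; exists u.+2; split=> /=; lia.
- case=> [[x y]] [[x' y'] [U pu qu pv qv]].
  have [Ep [c [Hc Ec Hh]]] := common_pt uv pu pv.
  have [Eq [c' [Hc' Ec' Hh']]] := common_pt uv qu qv.
  simpl in Ep, Ec, Eq, Ec'.
  case/orP: U => /eqP [Ex Ey]; last by lia.
  have Ec2 : c' = c.+1 by lia.
  subst c'; rewrite /= in Hh'.
  have Hx : hh e v c = 2 * u.+1 by lia.
  have := hh_lo e v c; have := hh_hi e v c => a b.
  have Ecu : c = u.+1 by lia.
  subst c. rewrite -Aj_e. apply: hh_eq; lia.
Qed.

Lemma hh_pos n (e : rel 'I_n) (v : 'I_n) c : 0 < hh e v c.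
Proof.
case: c => [|c]; last by have := hh_lo e v c.+1; lia.
rewrite /hh.
rewrite (_ : (v.+1 <= 0) = false) //=.
have -> : Aj e 0 v = false by apply/existsP; case=> w /andP[/eqP].
by [].
Qed.

Theorem theorem3 (n : nat) (e : rel 'I_n) (e_sym : symmetric e)
  (e_irr : irreflexive e) :
  exists P : 'I_n -> seq gpoint, xyp_EPG_rep e (3 * n) (2 * n) P.
Proof.
exists (PP e); split.
- move=> v; have [r [E Hp]] := PP_path e v; have vn := ltn_ord v.
  split; last by rewrite E; split; [exact: ur_mono | exact: ur_ends].
  split.
  + by rewrite E.
  + apply/allP => p Hm; case: p Hm => x y /mem_PP /=.
    case => [[c [Hc E1 H]] | [E1 H]].
      have [a1 a2 a3 a4 a5] := colF e Hc; have := hh_pos e v c.-1; rewrite /in_grid /=; lia.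
    rewrite /in_grid /=; lia.
  + rewrite E /=; exact: (sub_path ur_gadj Hp).
  + rewrite E; exact: ur_uniq.
- move=> u v Nuv.
  have [r [E Hp]] := PP_path e u; have [r' [E' Hp']] := PP_path e v.
  rewrite E E' share_ur // -E -E'.
  case: (ltngtP u v) => [uv | vu | Euv].
  + exact: key.
  + rewrite e_sym key //; split; case=> p [q [a b c d f]]; by exists p, q.
  + by rewrite (val_inj Euv) eqxx in Nuv.
Qed.
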